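(* Let $0\le\sigma<1$ and $f\colon[0,1]\to\mathbb R$, and put $f_\sigma(x)=f(x)/x^\sigma$. Assume that the Riemann sums $R_{f_\sigma}(\ell)=\frac1\ell\sum_{k=1}^\ell f_\sigma(k/\ell)$ converge to a finite limit $I(f_\sigma)$ as $\ell\to\infty$. Then $$\lim_{n\to\infty}\frac{S_{n,\sigma}(f)}{\sum_{1\le\ell\le n}\ell^{1-2\sigma}}=I(f_\sigma).$$
   Context: $S_{n,\sigma}(f)=\sum_{1\le k\le\ell\le n}\frac{1}{(k\ell)^\sigma}f\big(\frac k\ell\big)$ (quadratic Riemann sum). *)

(* Defs.v *)
From Stdlib Require Import Reals.
From Coquelicot Require Import Coquelicot.
Open Scope R_scope.

Fixpoint sum_from_1 (n : nat) (g : nat -> R) : R :=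
  match n with
  | O => 0
  | S m => sum_from_1 m g + g (S m)
  end.

(* f_sigma(x) = f(x) / x^sigma (used only at x = k/l > 0) *)
Definition f_sigma (sigma : R) (f : R -> R) (x : R) : R :=
  f x / Rpower x sigma.

Definition riemann_sum (g : R -> R) (l : nat) : R :=
  / INR l * sum_from_1 l (fun k => g (INR k / INR l)).

(* Quadratic Riemann sum
   S_{n,sigma}(f) = sum_{1<=k<=l<=n} (k l)^{-sigma} f(k/l) *)
Definition S_quad (n : nat) (sigma : R) (f : R -> R) : R :=
  sum_from_1 n (fun l =>
    sum_from_1 l (fun k =>
      / Rpower (INR k * INR l) sigma * f (INR k / INR l))).

Definition denom (n : nat) (sigma : R) : R :=
  sum_from_1 n (fun l => Rpower (INR l) (1 - 2 * sigma)).

(* Main.v *)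
Require Import Defs.
From Stdlib Require Import Reals Lra Lia.
From Coquelicot Require Import Coquelicot.
Open Scope R_scope.

Lemma sf1_shift g n : sum_from_1 (S n) g = sum_f_R0 (fun k => g (S k)) n.
Proof. induction n; simpl in *. lra. rewrite <- IHn. reflexivity. Qed.

Lemma sf1_ext g h n : (forall k, (1 <= k <= n)%nat -> g k = h k) ->
  sum_from_1 n g = sum_from_1 n h.
Proof. induction n; intros H; simpl. lra.
  rewrite IHn. rewrite H. lra. lia. intros; apply H; lia. Qed.

Lemma sf1_scal c g n : sum_from_1 n (fun k => c * g k) = c * sum_from_1 n g.
Proof. induction n; simpl. ring. rewrite IHn; ring. Qed.

Lemma Rp_pos x s : 0 < Rpower x s.
Proof. unfold Rpower; apply exp_pos. Qed.

Lemma key f s x y : 0 < x -> 0 < y ->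
  / Rpower (x * y) s * f (x / y) =
  Rpower y (1 - 2 * s) * (/ y * (f (x / y) / Rpower (x / y) s)).
Proof.
  intros hx hy.
  assert (E1 : Rpower (x * y) s = Rpower (x / y) s * Rpower y s * Rpower y s).
  { assert (hq : 0 < x / y) by (apply Rdiv_lt_0_compat; auto).
    rewrite (Rpower_mult_distr (x/y) y) by auto.
    rewrite Rpower_mult_distr by (try apply Rmult_lt_0_compat; auto).
    f_equal. field. lra. }
  assert (E2 : Rpower y (1 - 2 * s) = y * / (Rpower y s * Rpower y s)).
  { unfold Rminus. rewrite Rpower_plus, Rpower_Ropp, Rpower_1 by auto.
    replace (2 * s) with (s + s) by ring. rewrite Rpower_plus. reflexivity. }
  rewrite E1, E2.
  pose proof (Rp_pos (x/y) s). pose proof (Rp_pos y s).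
  field. repeat split; lra.
Qed.

Lemma ln_le_m1 a : 0 < a -> ln a <= a - 1.
Proof. intros ha. rewrite <- (ln_exp (a - 1)). apply ln_le; auto.
  pose proof (exp_ineq1_le (a - 1)). lra. Qed.

Lemma harm n : ln (INR (S (S n))) <= sum_f_R0 (fun j => / INR (S j)) n.
Proof.
  induction n.
  - change (ln (INR 2) <= / INR 1). rewrite INR_1.
    replace (INR 2) with 2 by (simpl; ring). pose proof (ln_le_m1 2). lra.
  - change (sum_f_R0 (fun j => / INR (S j)) (S n)) with (sum_f_R0 (fun j => / INR (S j)) n + / INR (S (S n))).
    assert (P : 0 < INR (S (S n))) by (apply lt_0_INR; lia).
    assert (ln (INR (S (S (S n)))) - ln (INR (S (S n))) <= / INR (S (S n))).
    { rewrite <- ln_div; auto. 2: apply lt_0_INR; lia.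
      eapply Rle_trans. apply ln_le_m1. apply Rdiv_lt_0_compat; auto. apply lt_0_INR; lia.
      rewrite (S_INR (S (S n))). right. field. lra. }
    lra.
Qed.

Theorem theorem5p3 (sigma : R) (f : R -> R) (I : R) :
  0 <= sigma < 1 ->
  is_lim_seq (fun l => riemann_sum (f_sigma sigma f) l) I ->
  is_lim_seq (fun n => S_quad n sigma f / denom n sigma) I.
Proof.
  intros Hs HR.
  set (An := fun j : nat => Rpower (INR (S j)) (1 - 2 * sigma)).
  set (Bn := fun j : nat => riemann_sum (f_sigma sigma f) (S j)).
  assert (HC : Un_cv (fun n => sum_f_R0 (fun k => An k * Bn k) n / sum_f_R0 An n) I).
  { apply Cesaro.
    - apply is_lim_seq_Reals. apply (is_lim_seq_incr_1 _ I) in HR. exact HR.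
    - intros; apply Rp_pos.
    - intros M. destruct (INR_archimed 1 (exp M)) as [N HN]; [lra|].
      exists N. intros n Hn.
      assert (A1 : sum_f_R0 (fun j => / INR (S j)) n <= sum_f_R0 An n).
      { apply sum_Rle. intros k _. unfold An.
        rewrite <- (Rpower_1 (INR (S k))) at 1 by (apply lt_0_INR; lia).
        rewrite <- Rpower_Ropp. apply Rle_Rpower. rewrite S_INR; pose proof (pos_INR k); lra.
        lra. }
      pose proof (harm n).
      assert (ln (INR (S (S n))) > M).
      { rewrite <- (ln_exp M). apply ln_increasing. apply exp_pos.
        eapply Rlt_le_trans. 2: apply le_INR; instantiate (1 := N); lia.
        lra. }
      lra. }
  apply is_lim_seq_incr_1. apply is_lim_seq_Reals in HC.
  eapply is_lim_seq_ext; [|exact HC]. intros n. simpl.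
  unfold S_quad, denom. rewrite !sf1_shift. f_equal.
  apply sum_eq. intros l _. unfold An, Bn, riemann_sum.
  rewrite <- sf1_scal, <- sf1_scal. symmetry. apply sf1_ext.
  intros k Hk. unfold f_sigma. apply key. apply lt_0_INR; lia. apply lt_0_INR; lia.
Qed.
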